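(* Let $\mathcal A$ be an abelian category. (1) The following are equivalent: (i) $\mathcal A$ is spectral; (ii) $\mathcal A$ has enough injectives and $N$ is $M$-$F$-split for all objects $M,N$ of $\mathcal A$ and every fully invariant subobject $F$ of $N$; (iii) $\mathcal A$ has enough injectives and every object $N$ is self-$F$-split for every fully invariant subobject $F$ of $N$; (iv) $\mathcal A$ has enough injectives and $N$ is $M$-$F$-split for all objects $M,N$ with $N$ injective and every fully invariant subobject $F$ of $N$; (v) $\mathcal A$ has enough injectives and every injective object $N$ is self-$F$-split for every fully invariant subobject $F$ of $N$. (2) The following are equivalent: (i) $\mathcal A$ is spectral; (ii) $\mathcal A$ has enough projectives and $N$ is dual $M$-$F$-split for all objects $M,N$ and every fully invariant subobject $F$ of $N$; (iii) $\mathcal A$ has enough projectives and every object $N$ is dual self-$F$-split for every fully invariant subobject $F$ of $N$; (iv) $\mathcal A$ has enough projectives and $N$ is dual $M$-$F$-split for all objects $M,N$ with $M$ projective and every fully invariant subobject $F$ of $N$; (v) $\mathcal A$ has enough projectives and every projective object $N$ is dual self-$F$-split for every fully invariant subobject $F$ of $N$.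
   Context: An abelian category is spectral if every short exact sequence in it splits. A morphism $s:X\to Y$ is a section if $ts=1_X$ for some $t$, a retraction if $st=1_Y$ for some $t$. A subobject $F$ of $N$ with inclusion $i:F\to N$ is fully invariant if for every morphism $h:N\to N$ there is $\alpha:F\to F$ with $hi=i\alpha$. For objects $M,N$ and a fully invariant subobject $F$ of $N$ with cokernel $d:N\to N/F$: $N$ is $M$-$F$-split if for every morphism $g:M\to N$, $\ker(dg)$ is a section; $N$ is dual $M$-$F$-split if for every morphism $g:N\to M$, $\mathrm{coker}(gi)$ is a retraction. Self-$F$-split means $N$-$F$-split (and similarly for the dual notion). *)

(* Defs.v *)
From HB Require Import structures.
From mathcomp Require Import all_boot all_algebra.
Set Implicit Arguments. Unset Strict Implicit. Unset Printing Implicit Defensive.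
Import GRing.Theory.
Local Open Scope ring_scope.

Record preadditive := PreAdditive {
  Obj :> Type;
  Mor : Obj -> Obj -> zmodType;
  comp : forall X Y Z : Obj, Mor Y Z -> Mor X Y -> Mor X Z;
  idm : forall X : Obj, Mor X X;
  compA : forall (W X Y Z : Obj) (h : Mor Y Z) (g : Mor X Y) (f : Mor W X),
      comp h (comp g f) = comp (comp h g) f;
  comp1m : forall (X Y : Obj) (f : Mor X Y), comp (idm Y) f = f;
  compm1 : forall (X Y : Obj) (f : Mor X Y), comp f (idm X) = f;
  compDl : forall (X Y Z : Obj) (f f' : Mor Y Z) (g : Mor X Y),
      comp (f + f') g = comp f g + comp f' g;
  compDr : forall (X Y Z : Obj) (f : Mor Y Z) (g g' : Mor X Y),
      comp f (g + g') = comp f g + comp f g'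
}.

Arguments Mor {C} X Y : rename.
Arguments comp {C X Y Z} f g : rename.
Arguments idm {C} X : rename.

Section Defs.
Variable C : preadditive.

Definition mono {X Y : C} (f : Mor X Y) : Prop :=
  forall (Z : C) (a b : Mor Z X), comp f a = comp f b -> a = b.
Definition epi {X Y : C} (f : Mor X Y) : Prop :=
  forall (Z : C) (a b : Mor Y Z), comp a f = comp b f -> a = b.
Definition is_section {X Y : C} (s : Mor X Y) : Prop :=
  exists t : Mor Y X, comp t s = idm X.
Definition is_retraction {X Y : C} (s : Mor X Y) : Prop :=
  exists t : Mor Y X, comp s t = idm Y.

Definition is_kernel {X Y K : C} (f : Mor X Y) (k : Mor K X) : Prop :=
  comp f k = 0 /\
  forall (Z : C) (h : Mor Z X), comp f h = 0 -> exists! u : Mor Z K, comp k u = h.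
Definition is_cokernel {X Y Q : C} (f : Mor X Y) (c : Mor Y Q) : Prop :=
  comp c f = 0 /\
  forall (Z : C) (h : Mor Y Z), comp h f = 0 -> exists! u : Mor Q Z, comp u c = h.

Definition is_zero_obj (Z : C) : Prop := idm Z = 0.

Definition is_biproduct (X Y P : C) (i1 : Mor X P) (i2 : Mor Y P)
    (p1 : Mor P X) (p2 : Mor P Y) : Prop :=
  [/\ comp p1 i1 = idm X, comp p2 i2 = idm Y, comp p2 i1 = 0, comp p1 i2 = 0
    & comp i1 p1 + comp i2 p2 = idm P].

Definition abelian : Prop :=
  (exists Z : C, is_zero_obj Z) /\
      (forall X Y : C, exists (P : C) (i1 : Mor X P) (i2 : Mor Y P)
          (p1 : Mor P X) (p2 : Mor P Y), is_biproduct i1 i2 p1 p2) /\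
      (forall (X Y : C) (f : Mor X Y), exists (K : C) (k : Mor K X), is_kernel f k) /\
      (forall (X Y : C) (f : Mor X Y), exists (Q : C) (c : Mor Y Q), is_cokernel f c) /\
      (forall (X Y : C) (f : Mor X Y), mono f -> exists (Z : C) (g : Mor Y Z), is_kernel g f) /\
      (forall (X Y : C) (f : Mor X Y), epi f -> exists (Z : C) (g : Mor Z X), is_cokernel g f).

Definition short_exact {A B D : C} (f : Mor A B) (g : Mor B D) : Prop :=
  is_kernel g f /\ is_cokernel f g.

Definition spectral : Prop :=
  forall (A B D : C) (f : Mor A B) (g : Mor B D), short_exact f g -> is_section f.

Definition injective_obj (E : C) : Prop :=
  forall (A B : C) (m : Mor A B) (f : Mor A E), mono m ->
    exists f' : Mor B E, comp f' m = f.
Definition projective_obj (P : C) : Prop :=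
  forall (A B : C) (e : Mor A B) (f : Mor P B), epi e ->
    exists f' : Mor P A, comp e f' = f.

Definition enough_injectives : Prop :=
  forall X : C, exists (E : C) (m : Mor X E), injective_obj E /\ mono m.
Definition enough_projectives : Prop :=
  forall X : C, exists (P : C) (e : Mor P X), projective_obj P /\ epi e.

Definition fully_invariant {F N : C} (i : Mor F N) : Prop :=
  forall h : Mor N N, exists alpha : Mor F F, comp h i = comp i alpha.

(* N is M-F-split, F given by the inclusion i : F -> N:
   for every g : M -> N, ker(d g) is a section, d : N -> N/F the cokernel of i
   (quantified over all choices of cokernel and kernel; they are unique up to iso) *)
Definition MF_split (M : C) {F N : C} (i : Mor F N) : Prop :=
  forall (Q : C) (d : Mor N Q), is_cokernel i d ->
  forall (g : Mor M N) (K : C) (k : Mor K M), is_kernel (comp d g) k -> is_section k.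

Definition dual_MF_split (M : C) {F N : C} (i : Mor F N) : Prop :=
  forall (g : Mor N M) (Q : C) (c : Mor M Q), is_cokernel (comp g i) c -> is_retraction c.

End Defs.

Arguments abelian : clear implicits.
Arguments spectral : clear implicits.
Arguments enough_injectives : clear implicits.
Arguments enough_projectives : clear implicits.

(* Main.v *)
Require Import Defs.
From mathcomp Require Import all_boot all_algebra.
Set Implicit Arguments. Unset Strict Implicit. Unset Printing Implicit Defensive.
Import GRing.Theory.
Local Open Scope ring_scope.

Local Notation cp := Defs.comp.

Lemma comp0m (C : preadditive) (X Y Z : C) (g : Mor X Y) : cp (0 : Mor Y Z) g = 0.
Proof. apply: (@GRing.addrI _ (cp (0 : Mor Y Z) g)); by rewrite -compDl !GRing.addr0. Qed.
Lemma compm0 (C : preadditive) (X Y Z : C) (f : Mor Y Z) : cp f (0 : Mor X Y) = 0.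
Proof. apply: (@GRing.addrI _ (cp f (0 : Mor X Y))); by rewrite -compDr !GRing.addr0. Qed.
Lemma compNl (C : preadditive) (X Y Z : C) (f : Mor Y Z) (g : Mor X Y) :
  cp (- f) g = - cp f g.
Proof. apply: (@GRing.addrI _ (cp f g)); by rewrite -compDl !GRing.subrr comp0m. Qed.
Lemma compNr (C : preadditive) (X Y Z : C) (f : Mor Y Z) (g : Mor X Y) :
  cp f (- g) = - cp f g.
Proof. apply: (@GRing.addrI _ (cp f g)); by rewrite -compDr !GRing.subrr compm0. Qed.
Lemma compBl (C : preadditive) (X Y Z : C) (f f' : Mor Y Z) (g : Mor X Y) :
  cp (f - f') g = cp f g - cp f' g.
Proof. by rewrite compDl compNl. Qed.
Lemma compBr (C : preadditive) (X Y Z : C) (f : Mor Y Z) (g g' : Mor X Y) :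
  cp f (g - g') = cp f g - cp f g'.
Proof. by rewrite compDr compNr. Qed.

Lemma kernel_mono (C : preadditive) (X Y K : C) (f : Mor X Y) (k : Mor K X) :
  is_kernel f k -> mono k.
Proof.
move=> [fk0 H] Z a b e.
have h0 : cp f (cp k a) = 0 by rewrite Defs.compA fk0 comp0m.
case: (H _ _ h0) => u [_ uq].
by rewrite -(uq a erefl) (uq b (esym e)).
Qed.

Lemma coker_epi (C : preadditive) (X Y Q : C) (f : Mor X Y) (c : Mor Y Q) :
  is_cokernel f c -> epi c.
Proof.
move=> [cf0 H] Z a b e.
have h0 : cp (cp a c) f = 0 by rewrite -Defs.compA cf0 compm0.
case: (H _ _ h0) => u [_ uq].
by rewrite -(uq a erefl) (uq b (esym e)).
Qed.

Lemma mono_ker_coker (C : preadditive) (HC : abelian C) (X Y Q : C)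
  (m : Mor X Y) (c : Mor Y Q) : mono m -> is_cokernel m c -> is_kernel c m.
Proof.
move=> mm [cm0 Hc].
have [_ [_ [_ [_ [Hmk _]]]]] := HC.
case: (Hmk _ _ _ mm) => Z [g [gm0 Hg]].
case: (Hc _ _ gm0) => u [uc _].
split=> // W h ch0. apply: Hg. by rewrite -uc -Defs.compA ch0 compm0.
Qed.

Lemma epi_coker_ker (C : preadditive) (HC : abelian C) (X Y K : C)
  (e : Mor X Y) (k : Mor K X) : epi e -> is_kernel e k -> is_cokernel k e.
Proof.
move=> me [ek0 Hk].
have [_ [_ [_ [_ [_ Hec]]]]] := HC.
case: (Hec _ _ _ me) => Z [g [eg0 Hg]].
case: (Hk _ _ eg0) => v [kv _].
split=> // W h hk0. apply: Hg. by rewrite -kv Defs.compA hk0 comp0m.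
Qed.

Lemma spec_mono_section (C : preadditive) (HC : abelian C) (S : spectral C)
  (X Y : C) (m : Mor X Y) : mono m -> is_section m.
Proof.
move=> mm. have [_ [_ [_ [Hcok _]]]] := HC.
case: (Hcok _ _ m) => Q [c cc].
apply: (S _ _ _ m c). split=> //. exact: mono_ker_coker.
Qed.

Lemma spec_epi_retraction (C : preadditive) (HC : abelian C) (S : spectral C)
  (X Y : C) (e : Mor X Y) : epi e -> is_retraction e.
Proof.
move=> me. have [_ [_ [Hker _]]] := HC.
case: (Hker _ _ e) => K [k kk].
have ck := epi_coker_ker HC me kk.
have [t tk] := S _ _ _ _ _ (conj kk ck).
have h0 : cp (idm X - cp k t) k = 0.
  by rewrite compBl comp1m -Defs.compA tk compm1 GRing.subrr.
case: ck => _ Hc. case: (Hc _ _ h0) => s [se _].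
exists s. apply: me. rewrite -Defs.compA se compBr compm1 Defs.compA (proj1 kk).
by rewrite comp0m GRing.subr0 comp1m.
Qed.

Lemma ses_retraction_section (C : preadditive) (A B D : C) (f : Mor A B) (g : Mor B D) :
  short_exact f g -> is_retraction g -> is_section f.
Proof.
move=> [kf cf] [s gs].
have h0 : cp g (idm B - cp s g) = 0.
  by rewrite compBr compm1 Defs.compA gs comp1m GRing.subrr.
case: (proj2 kf _ _ h0) => t [ft _].
exists t. apply: (kernel_mono kf).
rewrite Defs.compA ft compBl comp1m -Defs.compA (proj1 cf) compm0 GRing.subr0.
by rewrite compm1.
Qed.

Lemma spec_all_inj (C : preadditive) (HC : abelian C) (S : spectral C) (E : C) :
  injective_obj E.
Proof.
move=> A B m f mm. have [t tm] := spec_mono_section HC S mm.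
exists (cp f t). by rewrite -Defs.compA tm compm1.
Qed.

Lemma spec_all_proj (C : preadditive) (HC : abelian C) (S : spectral C) (P : C) :
  projective_obj P.
Proof.
move=> A B e f me. have [s es] := spec_epi_retraction HC S me.
exists (cp s f). by rewrite Defs.compA es comp1m.
Qed.

Lemma biprod_inj (C : preadditive) (X Y P : C) (i1 : Mor X P) (i2 : Mor Y P)
  (p1 : Mor P X) (p2 : Mor P Y) : is_biproduct i1 i2 p1 p2 ->
  injective_obj X -> injective_obj Y -> injective_obj P.
Proof.
move=> [h1 h2 h3 h4 h5] IX IY A B m f mm.
case: (IX _ _ m (cp p1 f) mm) => g1 e1.
case: (IY _ _ m (cp p2 f) mm) => g2 e2.
exists (cp i1 g1 + cp i2 g2).
by rewrite compDl -!Defs.compA e1 e2 !Defs.compA -compDl h5 comp1m.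
Qed.

Lemma biprod_proj (C : preadditive) (X Y P : C) (i1 : Mor X P) (i2 : Mor Y P)
  (p1 : Mor P X) (p2 : Mor P Y) : is_biproduct i1 i2 p1 p2 ->
  projective_obj X -> projective_obj Y -> projective_obj P.
Proof.
move=> [h1 h2 h3 h4 h5] PX PY A B e f me.
case: (PX _ _ e (cp f i1) me) => g1 e1.
case: (PY _ _ e (cp f i2) me) => g2 e2.
exists (cp g1 p1 + cp g2 p2).
by rewrite compDr !Defs.compA e1 e2 -!Defs.compA -compDr h5 compm1.
Qed.


Lemma compAK (C : preadditive) (W X Y Z : C) (x : Mor Y Z) (y : Mor X Y) (w : Mor X Z)
  (z : Mor W X) : cp x y = w -> cp x (cp y z) = cp w z.
Proof. by move=> <-; rewrite Defs.compA. Qed.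

Lemma v_spec (C : preadditive) (HC : abelian C) (EI : enough_injectives C)
  (H : forall (N F : C) (i : Mor F N), injective_obj N ->
        mono i -> fully_invariant i -> MF_split N i) : spectral C.
Proof.
have [[Z Z0] [Hbi [Hker [Hcok _]]]] := HC.
have step1 : forall (E A : C) (m : Mor A E), injective_obj E -> mono m -> is_section m.
  move=> E A m IE mm.
  case: (Hcok _ _ m) => Q [c cc].
  case: (EI Q) => E2 [n [IE2 mn]].
  case: (Hbi E E2) => N [i1 [i2 [p1 [p2 bp]]]].
  case: (Hbi A E2) => AB [j1 [j2 [q1 [q2 [a1 a2 a3 a4 a5]]]]].
  have IN := biprod_inj bp IE IE2.
  case: bp => b1 b2 b3 b4 b5.
  pose h : Mor N N := cp i2 (cp n (cp c p1)).
  pose k : Mor AB N := cp i1 (cp m q1) + cp i2 q2.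
  have z0 : mono (0 : Mor Z N).
    move=> W a b _. by rewrite -(comp1m a) -(comp1m b) Z0 !comp0m.
  have zfi : fully_invariant (0 : Mor Z N).
    move=> g; exists 0; by rewrite !compm0.
  have dcok : is_cokernel (0 : Mor Z N) (idm N).
    split; first by rewrite compm0.
    move=> W g _. exists g; split; first by rewrite compm1.
    by move=> u; rewrite compm1 => ->.
  have mc := mono_ker_coker HC mm cc.
  have kmono : mono k.
    move=> W a b e.
    have f1 := congr1 (cp p1) e. have f2 := congr1 (cp p2) e.
    rewrite /k !compDl !compDr -!Defs.compA ?(compAK _ b1) ?(compAK _ b2)
      ?(compAK _ b3) ?(compAK _ b4) !comp1m !comp0m ?GRing.addr0 ?GRing.add0r in f1 f2.
    have g1 := mm _ _ _ f1.
    by rewrite -(comp1m a) -(comp1m b) -a5 !compDl -!Defs.compA g1 f2.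
  have kk : is_kernel (cp (idm N) h) k.
    rewrite comp1m. split.
      rewrite /h /k compDr -!Defs.compA (compAK _ b1) comp1m (compAK _ (proj1 cc)).
      by rewrite (compAK _ b4) !comp0m !compm0 GRing.addr0.
    move=> W z hz.
    have e2 : cp n (cp c (cp p1 z)) = cp n 0.
      have := congr1 (cp p2) hz.
      by rewrite /h -!Defs.compA (compAK _ b2) comp1m !compm0 => ->.
    have e3 := mn _ _ _ e2.
    case: mc => _ Hm. case: (Hm _ _ e3) => u [mu umq].
    pose v := cp j1 u + cp j2 (cp p2 z).
    have kv : cp k v = z.
      rewrite /k /v compDl !compDr -!Defs.compA (compAK _ a1) (compAK _ a4).
      rewrite (compAK _ a3) (compAK _ a2) !comp1m !comp0m !compm0 GRing.addr0 GRing.add0r mu.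
      by rewrite !Defs.compA -compDl b5 comp1m.
    exists v; split=> // v' e'. apply: kmono. by rewrite e' kv.
  have [t tk] := H N Z 0 IN z0 zfi N (idm N) dcok h AB k kk.
  have kj : cp k j1 = cp i1 m.
    by rewrite /k compDl -!Defs.compA a1 a3 compm1 !compm0 GRing.addr0.
  exists (cp q1 (cp t i1)).
  by rewrite -!Defs.compA -kj (Defs.compA t k) tk comp1m a1.
have inj : forall X : C, injective_obj X.
  move=> X. case: (EI X) => E [m [IE mm]].
  have [r rm] := step1 _ _ m IE mm.
  move=> A B x f mx. case: (IE _ _ x (cp m f) mx) => g eg.
  exists (cp r g). by rewrite -Defs.compA eg Defs.compA rm comp1m.
move=> A B D f g [kf cf]. have mf := kernel_mono kf.
case: (inj A _ _ f (idm A) mf) => t tf. by exists t.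
Qed.

Lemma v_spec_dual (C : preadditive) (HC : abelian C) (EP : enough_projectives C)
  (H : forall (N F : C) (i : Mor F N), projective_obj N ->
        mono i -> fully_invariant i -> dual_MF_split N i) : spectral C.
Proof.
have [[Z Z0] [Hbi [Hker [Hcok _]]]] := HC.
have step1 : forall (P A : C) (e : Mor P A), projective_obj P -> epi e -> is_retraction e.
  move=> P A e PP me.
  case: (Hker _ _ e) => K [k kk].
  case: (EP K) => P2 [q [PP2 mq]].
  case: (Hbi P P2) => N [i1 [i2 [p1 [p2 bp]]]].
  case: (Hbi A P2) => AB [j1 [j2 [q1 [q2 [a1 a2 a3 a4 a5]]]]].
  have PN := biprod_proj bp PP PP2.
  case: bp => b1 b2 b3 b4 b5.
  pose h : Mor N N := cp i1 (cp k (cp q p2)).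
  pose c : Mor N AB := cp j1 (cp e p1) + cp j2 p2.
  have mid : mono (idm N). move=> W a b; by rewrite !comp1m.
  have fi : fully_invariant (idm N). move=> g; exists g; by rewrite comp1m compm1.
  have ck := epi_coker_ker HC me kk.
  have cepi : epi c.
    move=> W a b ee.
    have f1 := congr1 (fun x => cp x i1) ee. have f2 := congr1 (fun x => cp x i2) ee.
    rewrite /= /c -!Defs.compA !compDl !compDr -!Defs.compA b1 b2 b3 b4 !compm1 !compm0
      ?GRing.addr0 ?GRing.add0r in f1 f2.
    rewrite !Defs.compA in f1. have g1 := me _ _ _ f1.
    by rewrite -(compm1 a) -(compm1 b) -a5 !compDr !Defs.compA g1 f2.
  have cok : is_cokernel (cp h (idm N)) c.
    rewrite compm1. split.
      rewrite /c /h compDl -!Defs.compA (compAK _ b1) comp1m (compAK _ (proj1 kk)).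
      by rewrite (compAK _ b3) !comp0m !compm0 GRing.addr0.
    move=> W z hz.
    have e2 : cp (cp (cp z i1) k) q = cp 0 q.
      have := congr1 (fun x => cp x i2) hz.
      rewrite /= /h comp0m -!Defs.compA b2 compm1 => ->.
      by rewrite comp0m.
    have e3 := mq _ _ _ e2.
    case: ck => _ Hc. case: (Hc _ _ e3) => u [ue uq].
    pose v := cp u q1 + cp (cp z i2) q2.
    have vc : cp v c = z.
      rewrite /v /c compDl !compDr -!Defs.compA (compAK _ a1) (compAK _ a4).
      rewrite (compAK _ a3) (compAK _ a2) !comp1m !comp0m !compm0 GRing.addr0 GRing.add0r.
      by rewrite (Defs.compA u) ue -!Defs.compA -compDr b5 compm1.
    exists v; split=> // v' e'. apply: cepi. by rewrite e' vc.
  have [s cs] := H N N (idm N) PN mid fi h AB c cok.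
  have q1c : cp q1 c = cp e p1.
    by rewrite /c compDr (compAK _ a1) (compAK _ a4) comp1m comp0m GRing.addr0.
  exists (cp p1 (cp s j1)).
  by rewrite !Defs.compA -q1c -(Defs.compA q1 c s) cs compm1 a1.
have proj : forall X : C, projective_obj X.
  move=> X. case: (EP X) => P [e [PP me]].
  have [s es] := step1 _ _ e PP me.
  move=> A B x f mx. case: (PP _ _ x (cp f e) mx) => g gx.
  exists (cp g s). by rewrite Defs.compA gx -Defs.compA es compm1.
move=> A B D f g [kf cf]. have ge := coker_epi cf.
case: (proj D _ _ g (idm D) ge) => s gs.
apply: (ses_retraction_section (conj kf cf)). by exists s.
Qed.

Theorem theorem6p1 (C : preadditive) (HC : abelian C) :
  (* (1) *)
  ((spectral C <->
      enough_injectives C /\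
      forall (M N F : C) (i : Mor F N), mono i -> fully_invariant i -> MF_split M i)
   /\ (spectral C <->
      enough_injectives C /\
      forall (N F : C) (i : Mor F N), mono i -> fully_invariant i -> MF_split N i)
   /\ (spectral C <->
      enough_injectives C /\
      forall (M N F : C) (i : Mor F N), injective_obj N ->
        mono i -> fully_invariant i -> MF_split M i)
   /\ (spectral C <->
      enough_injectives C /\
      forall (N F : C) (i : Mor F N), injective_obj N ->
        mono i -> fully_invariant i -> MF_split N i))
  /\
  (* (2) *)
  ((spectral C <->
      enough_projectives C /\
      forall (M N F : C) (i : Mor F N), mono i -> fully_invariant i -> dual_MF_split M i)
   /\ (spectral C <->
      enough_projectives C /\
      forall (N F : C) (i : Mor F N), mono i -> fully_invariant i -> dual_MF_split N i)
   /\ (spectral C <->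
      enough_projectives C /\
      forall (M N F : C) (i : Mor F N), projective_obj M ->
        mono i -> fully_invariant i -> dual_MF_split M i)
   /\ (spectral C <->
      enough_projectives C /\
      forall (N F : C) (i : Mor F N), projective_obj N ->
        mono i -> fully_invariant i -> dual_MF_split N i)).
Proof.
have mid : forall X : C, mono (idm X) by move=> X W a b; rewrite !comp1m.
have SI : spectral C -> enough_injectives C.
  move=> S X. exists X, (idm X). split; [exact: spec_all_inj | exact: mid].
have SP : spectral C -> enough_projectives C.
  move=> S X. exists X, (idm X). split; [exact: spec_all_proj | ].
  by move=> W a b; rewrite !compm1.
have SM : spectral C -> forall (M N F : C) (i : Mor F N), MF_split M i.
  move=> S M N F i Q d _ g K k kk.
  exact: (spec_mono_section HC S (kernel_mono kk)).
have SD : spectral C -> forall (M N F : C) (i : Mor F N), dual_MF_split M i.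
  move=> S M N F i g Q c cc.
  exact: (spec_epi_retraction HC S (coker_epi cc)).
split; (split; [|split; [|split]]); split.
- move=> S; split; [exact: SI S | by move=> *; apply: SM].
- case=> EI H; apply: v_spec => // N F i _ ??; exact: H.
- move=> S; split; [exact: SI S | by move=> *; apply: SM].
- case=> EI H; apply: v_spec => // N F i _ ??; exact: H.
- move=> S; split; [exact: SI S | by move=> *; apply: SM].
- case=> EI H; apply: v_spec => // N F i IN ??; exact: H.
- move=> S; split; [exact: SI S | by move=> *; apply: SM].
- case=> EI H; apply: v_spec => // N F i IN ??; exact: H.
- move=> S; split; [exact: SP S | by move=> *; apply: SD].
- case=> EP H; apply: v_spec_dual => // N F i _ ??; exact: H.
- move=> S; split; [exact: SP S | by move=> *; apply: SD].
- case=> EP H; apply: v_spec_dual => // N F i _ ??; exact: H.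
- move=> S; split; [exact: SP S | by move=> *; apply: SD].
- case=> EP H; apply: v_spec_dual => // N F i IN ??; exact: H.
- move=> S; split; [exact: SP S | by move=> *; apply: SD].
- case=> EP H; apply: v_spec_dual => // N F i IN ??; exact: H.
Qed.
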